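(* Let $P\in\mathcal H$ be a right group-like projection such that $\mathcal V_P$ is a Frobenius algebra, and let $y\in{}_P\mathcal V$ be a cyclic element for the right $\mathcal V_P$-module ${}_P\mathcal V$ (so that $a\mapsto S(a)y$ is a linear bijection $\mathcal V_P\to{}_P\mathcal V$). Define $\iota_y:{}_P\mathcal V\to\mathcal V_P$ by $\iota_y(S(a)y)=a$ for $a\in\mathcal V_P$, and put $z_y=P_{(2)}\,\iota_y(P_{(1)})\in\mathcal V_P$. If $z_y$ is invertible in $\mathcal V_P$, then every right $\mathcal V_P$-module is completely reducible; in particular $\mathcal V_P$ is semisimple.
   Context: $k$ is a field; $\mathcal H$ is a Hopf algebra over $k$ with comultiplication $\Delta$ (Sweedler notation $\Delta(x)=x_{(1)}\otimes x_{(2)}$), counit $\varepsilon$, invertible antipode $S$, dual $\mathcal H'$. For $P\in\mathcal H$, $\mathcal V_P=\{(\nu\otimes\mathrm{id})\Delta(P):\nu\in\mathcal H'\}$ and ${}_P\mathcal V=\{(\mathrm{id}\otimes\nu)\Delta(P):\nu\in\mathcal H'\}$. A non-zero idempotent $P$ is a right group-like projection if $\Delta(P)(1\otimes P)=(1\otimes P)\Delta(P)=P\otimes P$; then $\mathcal V_P$ is a subalgebra, $(1\otimes a)\Delta(P)=(S(a)\otimes1)\Delta(P)$ for $a\in\mathcal V_P$, and ${}_P\mathcal V$ is a right $\mathcal V_P$-module via $x\cdot a=S(a)x$. A finite-dimensional unital algebra is Frobenius if it admits a non-degenerate bilinear form $\sigma$ with $\sigma(ab,c)=\sigma(a,bc)$.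 An element $y$ of a right module $M$ is cyclic if $y\cdot\mathcal V_P=M$. *)

(* Defs.v *)
From HB Require Import structures.
From mathcomp Require Import all_boot all_order all_algebra.
Set Implicit Arguments. Unset Strict Implicit. Unset Printing Implicit Defensive.
Import GRing.Theory.
Local Open Scope ring_scope.

(* Algebraic tensor products H (x) H and H (x) H (x) H are represented by     *)
(* finite lists of simple tensors (Sweedler-style representatives).  Two     *)
(* representatives denote the same tensor iff every bilinear (resp.          *)
(* trilinear) map into any k-vector space takes the same value on them       *)
(* (universal property of the tensor product).                               *)
Section Tensor.
Variables (k : fieldType) (H : lmodType k).

Definition bilin (W : lmodType k) (beta : H -> H -> W) : Prop :=
  (forall b (c : k) x y, beta (c *: x + y) b = c *: beta x b + beta y b) /\
  (forall a (c : k) x y, beta a (c *: x + y) = c *: beta a x + beta a y).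

Definition trilin (W : lmodType k) (beta : H -> H -> H -> W) : Prop :=
  (forall b d (c : k) x y, beta (c *: x + y) b d = c *: beta x b d + beta y b d) /\
  (forall a d (c : k) x y, beta a (c *: x + y) d = c *: beta a x d + beta a y d) /\
  (forall a b (c : k) x y, beta a b (c *: x + y) = c *: beta a b x + beta a b y).

Definition teq2 (s t : seq (H * H)) : Prop :=
  forall (W : lmodType k) (beta : H -> H -> W), bilin beta ->
    \sum_(p <- s) beta p.1 p.2 = \sum_(p <- t) beta p.1 p.2.

Definition teq3 (s t : seq (H * H * H)) : Prop :=
  forall (W : lmodType k) (beta : H -> H -> H -> W), trilin beta ->
    \sum_(p <- s) beta p.1.1 p.1.2 p.2 = \sum_(p <- t) beta p.1.1 p.1.2 p.2.

Definition lin_functional (nu : H -> k) : Prop :=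
  forall (c : k) x y, nu (c *: x + y) = c * nu x + nu y.

Definition klinear (f : H -> H) : Prop :=
  forall (c : k) x y, f (c *: x + y) = c *: f x + f y.

End Tensor.

(* hDelta x is a representative  [:: (x_(1), x_(2)); ...]  of Delta(x).      *)
Record hopf (k : fieldType) (H : algType k) := Hopf {
  hDelta : H -> seq (H * H);
  heps : H -> k;
  hS : H -> H;
  hDelta_lin : forall (c : k) x y,
    teq2 (hDelta (c *: x + y))
         ([seq (c *: p.1, p.2) | p <- hDelta x] ++ hDelta y);
  hDelta_mul : forall x y,
    teq2 (hDelta (x * y))
         [seq (p.1 * q.1, p.2 * q.2) | p <- hDelta x, q <- hDelta y];
  hDelta_1 : teq2 (hDelta 1) [:: (1, 1)];
  hDelta_coassoc : forall x,
    teq3 [seq (q.1, q.2, p.2) | p <- hDelta x, q <- hDelta p.1]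
         [seq (p.1, q.1, q.2) | p <- hDelta x, q <- hDelta p.2];
  heps_lin : lin_functional heps;
  heps_mul : forall x y, heps (x * y) = heps x * heps y;
  heps_1 : heps 1 = 1;
  heps_counitl : forall x, \sum_(p <- hDelta x) heps p.1 *: p.2 = x;
  heps_counitr : forall x, \sum_(p <- hDelta x) heps p.2 *: p.1 = x;
  hS_lin : klinear hS;
  hS_antipodel : forall x, \sum_(p <- hDelta x) hS p.1 * p.2 = heps x *: 1;
  hS_antipoder : forall x, \sum_(p <- hDelta x) p.1 * hS p.2 = heps x *: 1;
  hS_bij : bijective hS
}.

Section GroupLike.
Variables (k : fieldType) (H : algType k) (h : hopf H).

Definition inVP (P x : H) : Prop :=
  exists nu : H -> k, lin_functional nu /\
    x = \sum_(p <- hDelta h P) nu p.1 *: p.2.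

Definition inPV (P x : H) : Prop :=
  exists nu : H -> k, lin_functional nu /\
    x = \sum_(p <- hDelta h P) nu p.2 *: p.1.

Definition right_group_like_projection (P : H) : Prop :=
  [/\ P != 0, P * P = P,
      teq2 [seq (p.1, p.2 * P) | p <- hDelta h P] [:: (P, P)] &
      teq2 [seq (p.1, P * p.2) | p <- hDelta h P] [:: (P, P)]].

Definition VP_Frobenius (P : H) : Prop :=
  exists sigma : H -> H -> k,
    [/\ (forall b c x y, inVP P b -> inVP P x -> inVP P y ->
           sigma (c *: x + y) b = c * sigma x b + sigma y b),
        (forall a c x y, inVP P a -> inVP P x -> inVP P y ->
           sigma a (c *: x + y) = c * sigma a x + sigma a y),
        (forall a b c, inVP P a -> inVP P b -> inVP P c ->
           sigma (a * b) c = sigma a (b * c)),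
        (forall a, inVP P a -> (forall b, inVP P b -> sigma a b = 0) -> a = 0) &
        (forall b, inVP P b -> (forall a, inVP P a -> sigma a b = 0) -> b = 0)].

(* y is cyclic for the right V_P-module _P V (action x . a = S(a) x) *)
Definition cyclic_PV (P y : H) : Prop :=
  inPV P y /\ forall x, inPV P x -> exists2 a, inVP P a & x = hS h a * y.

(* right V_P-modules: an additive group M with an action of the elements
   of V_P (elements of H outside V_P act arbitrarily / irrelevantly) *)
Definition right_VP_module (P : H) (M : zmodType) (act : M -> H -> M) : Prop :=
  [/\ (forall m, act m 1 = m),
      (forall m n a, inVP P a -> act (m + n) a = act m a + act n a),
      (forall m a b, inVP P a -> inVP P b -> act m (a + b) = act m a + act m b) &
      (forall m a b, inVP P a -> inVP P b -> act m (a * b) = act (act m a) b)].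

Definition submodule (P : H) (M : zmodType) (act : M -> H -> M)
    (N : M -> Prop) : Prop :=
  [/\ N 0, (forall m n, N m -> N n -> N (m + n)) &
      (forall m a, N m -> inVP P a -> N (act m a))].

Definition completely_reducible (P : H) (M : zmodType) (act : M -> H -> M) : Prop :=
  forall N, submodule P act N ->
    exists N', [/\ submodule P act N',
      (forall m, exists n, exists n', [/\ N n, N' n' & m = n + n']) &
      (forall m, N m -> N' m -> m = 0)].

End GroupLike.

(* Main.v *)
Require Import Defs.
From HB Require Import structures.
From mathcomp Require Import all_boot all_order all_algebra ring.
From mathcomp Require Import boolp classical_sets.
From Stdlib Require Import Classical.
Set Implicit Arguments. Unset Strict Implicit. Unset Printing Implicit Defensive.
Import GRing.Theory.
Local Open Scope ring_scope.

Section Lin.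
Variable k : fieldType.

Definition lin1 (U W : lmodType k) (f : U -> W) :=
  forall c x y, f (c *: x + y) = c *: f x + f y.

Section L.
Variables (U W : lmodType k) (f : U -> W) (Hf : lin1 f).
Lemma lin1_0 : f 0 = 0.
Proof.
have E := Hf 1 0 0; rewrite scaler0 addr0 scale1r in E.
by apply: (@addrI _ (f 0)); rewrite addr0 -E.
Qed.
Lemma lin1D x y : f (x + y) = f x + f y.
Proof. by have := Hf 1 x y; rewrite !scale1r. Qed.
Lemma lin1Z c x : f (c *: x) = c *: f x.
Proof. by have := Hf c x 0; rewrite addr0 lin1_0 addr0. Qed.
Lemma lin1N x : f (- x) = - f x.
Proof. by rewrite -scaleN1r lin1Z scaleN1r. Qed.
Lemma lin1B x y : f (x - y) = f x - f y.
Proof. by rewrite lin1D lin1N. Qed.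
Lemma lin1_sum I (r : seq I) (F : I -> U) :
  f (\sum_(i <- r) F i) = \sum_(i <- r) f (F i).
Proof.
elim: r => [|a r IH]; first by rewrite !big_nil lin1_0.
by rewrite !big_cons lin1D IH.
Qed.
End L.

Lemma lin1_sumf (U W : lmodType k) I (r : seq I) (F : I -> U -> W) :
  (forall i, lin1 (F i)) -> lin1 (fun x => \sum_(i <- r) F i x).
Proof.
move=> HF c x y; rewrite scaler_sumr -big_split /=.
by apply: eq_bigr => i _; rewrite HF.
Qed.

Lemma lin1_comp (U V W : lmodType k) (f : V -> W) (g : U -> V) :
  lin1 f -> lin1 g -> lin1 (fun x => f (g x)).
Proof. by move=> Hf Hg c x y; rewrite Hg Hf. Qed.

Lemma lin1_scale (U W : lmodType k) (f : U -> W) (a : k) :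
  lin1 f -> lin1 (fun x => a *: f x).
Proof. by move=> Hf c x y; rewrite Hf scalerDr !scalerA mulrC. Qed.

Lemma lin1_scalel (U W : lmodType k) (nu : U -> k) (w : W) :
  lin_functional nu -> lin1 (fun x => nu x *: w).
Proof. by move=> Hn c x y; rewrite Hn scalerDl scalerA. Qed.

Lemma lf_lin1 (U : lmodType k) (nu : U -> k) :
  lin_functional nu -> @lin1 U k^o nu.
Proof. by []. Qed.

Lemma lin1_lf (U : lmodType k) (nu : U -> k) :
  @lin1 U k^o nu -> lin_functional nu.
Proof. by []. Qed.

Lemma bilinl (U W : lmodType k) (b : U -> U -> W) : bilin b -> forall y, lin1 (b^~ y).
Proof. by case=> H1 _ y c x z; apply: H1. Qed.
Lemma bilinr (U W : lmodType k) (b : U -> U -> W) : bilin b -> forall x, lin1 (b x).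
Proof. by case=> _ H2 x c y z; apply: H2. Qed.
Lemma mk_bilin (U W : lmodType k) (b : U -> U -> W) :
  (forall y, lin1 (b^~ y)) -> (forall x, lin1 (b x)) -> bilin b.
Proof. by move=> H1 H2; split=> *; [apply: H1|apply: H2]. Qed.

Lemma trilin1 (U W : lmodType k) (b : U -> U -> U -> W) : trilin b -> forall y z, lin1 (fun x => b x y z).
Proof. by case=> H1 _ y z c x w; apply: H1. Qed.
Lemma trilin2 (U W : lmodType k) (b : U -> U -> U -> W) : trilin b -> forall x z, lin1 (fun y => b x y z).
Proof. by case=> _ [H2 _] x z c y w; apply: H2. Qed.
Lemma trilin3 (U W : lmodType k) (b : U -> U -> U -> W) : trilin b -> forall x y, lin1 (b x y).
Proof. by case=> _ [_ H3] x y c z w; apply: H3. Qed.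
Lemma mk_trilin (U W : lmodType k) (b : U -> U -> U -> W) :
  (forall y z, lin1 (fun x => b x y z)) -> (forall x z, lin1 (fun y => b x y z)) ->
  (forall x y, lin1 (b x y)) -> trilin b.
Proof. by move=> H1 H2 H3; split; [|split] => *; [apply: H1|apply: H2|apply: H3]. Qed.

Lemma lin1_mull (A : algType k) (a : A) : lin1 (fun x : A => x * a).
Proof. by move=> c x y; rewrite mulrDl scalerAl. Qed.
Lemma lin1_mulr (A : algType k) (a : A) : lin1 (fun x : A => a * x).
Proof. by move=> c x y; rewrite mulrDr scalerAr. Qed.
Lemma lin1_id (U : lmodType k) : lin1 (fun x : U => x).
Proof. by []. Qed.

End Lin.

Section Comp.
Variable k : fieldType.
Lemma tri1_comp (U W : lmodType k) (g : U -> U -> U -> W) (phi : U -> U) b c :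
  trilin g -> lin1 phi -> lin1 (fun x => g (phi x) b c).
Proof. by move=> Hg Hp c' x y; rewrite Hp (trilin1 Hg). Qed.
Lemma tri2_comp (U W : lmodType k) (g : U -> U -> U -> W) (phi : U -> U) a c :
  trilin g -> lin1 phi -> lin1 (fun x => g a (phi x) c).
Proof. by move=> Hg Hp c' x y; rewrite Hp (trilin2 Hg). Qed.
Lemma tri3_comp (U W : lmodType k) (g : U -> U -> U -> W) (phi : U -> U) a b :
  trilin g -> lin1 phi -> lin1 (fun x => g a b (phi x)).
Proof. by move=> Hg Hp c' x y; rewrite Hp (trilin3 Hg). Qed.
Lemma bil1_comp (U W : lmodType k) (g : U -> U -> W) (phi : U -> U) b :
  bilin g -> lin1 phi -> lin1 (fun x => g (phi x) b).
Proof. by move=> Hg Hp c' x y; rewrite Hp (bilinl Hg). Qed.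
Lemma bil2_comp (U W : lmodType k) (g : U -> U -> W) (phi : U -> U) a :
  bilin g -> lin1 phi -> lin1 (fun x => g a (phi x)).
Proof. by move=> Hg Hp c' x y; rewrite Hp (bilinr Hg). Qed.
Lemma mull_comp (A : algType k) (phi : A -> A) a :
  lin1 phi -> lin1 (fun x => phi x * a).
Proof. by move=> Hp c x y; rewrite Hp mulrDl scalerAl. Qed.
Lemma mulr_comp (A : algType k) (phi : A -> A) a :
  lin1 phi -> lin1 (fun x => a * phi x).
Proof. by move=> Hp c x y; rewrite Hp mulrDr scalerAr. Qed.
Lemma fun_comp (U W : lmodType k) (f : U -> W) (phi : U -> U) :
  lin1 f -> lin1 phi -> lin1 (fun x => f (phi x)).
Proof. by move=> Hf Hp c x y; rewrite Hp Hf. Qed.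
Lemma lf_comp (U W : lmodType k) (nu : U -> k) (phi : U -> U) (w : W) :
  lin_functional nu -> lin1 phi -> lin1 (fun x => nu (phi x) *: w).
Proof. by move=> Hn Hp c x y; rewrite Hp Hn scalerDl scalerA. Qed.
Lemma scale_comp (U W : lmodType k) (f : U -> W) (a : k) :
  lin1 f -> lin1 (fun x => a *: f x).
Proof. by move=> Hf c x y; rewrite Hf scalerDr !scalerA mulrC. Qed.
End Comp.

Ltac lin :=
  first
  [ exact: lin1_id
  | apply: lin1_sumf => ?; lin
  | apply: scale_comp; lin
  | solve [apply: tri1_comp; [eassumption|lin]]
  | solve [apply: tri2_comp; [eassumption|lin]]
  | solve [apply: tri3_comp; [eassumption|lin]]
  | solve [apply: bil1_comp; [eassumption|lin]]
  | solve [apply: bil2_comp; [eassumption|lin]]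
  | solve [apply: lf_comp; [eassumption|lin]]
  | solve [apply: mull_comp; lin]
  | solve [apply: mulr_comp; lin]
  | solve [apply: fun_comp; [eassumption|lin]]
  | eassumption ].

Section HopfSums.
Variables (k : fieldType) (H : algType k) (h : hopf H).
Local Notation D := (hDelta h).
Local Notation S := (hS h).
Local Notation eps := (heps h).

Lemma S_lin : lin1 S.
Proof. exact: hS_lin. Qed.
Lemma eps_lin : @lin1 k H k^o eps.
Proof. exact: heps_lin. Qed.

Lemma sumD_lin (W : lmodType k) (b : H -> H -> W) : bilin b ->
  lin1 (fun x => \sum_(p <- D x) b p.1 p.2).
Proof.
move=> Hb c x y; rewrite (hDelta_lin h c x y Hb) big_cat big_map /=.
congr (_ + _); rewrite scaler_sumr; apply: eq_bigr => p _.
by rewrite (lin1Z (bilinl Hb _)).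
Qed.

Lemma sumD_mul (W : lmodType k) (b : H -> H -> W) x y : bilin b ->
  \sum_(p <- D (x * y)) b p.1 p.2 =
  \sum_(p <- D x) \sum_(q <- D y) b (p.1 * q.1) (p.2 * q.2).
Proof. by move=> Hb; rewrite (hDelta_mul h x y Hb) big_allpairs_dep. Qed.

Lemma coassoc (W : lmodType k) (g : H -> H -> H -> W) x : trilin g ->
  \sum_(p <- D x) \sum_(q <- D p.1) g q.1 q.2 p.2 =
  \sum_(p <- D x) \sum_(q <- D p.2) g p.1 q.1 q.2.
Proof.
move=> Hg; have := hDelta_coassoc h x Hg.
by rewrite !big_allpairs_dep.
Qed.

Lemma counitl (W : lmodType k) (G : H -> W) x : lin1 G ->
  \sum_(p <- D x) eps p.1 *: G p.2 = G x.
Proof.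
move=> HG; rewrite -{2}(heps_counitl h x) (lin1_sum HG).
by apply: eq_bigr => p _; rewrite (lin1Z HG).
Qed.

Lemma counitr (W : lmodType k) (G : H -> W) x : lin1 G ->
  \sum_(p <- D x) eps p.2 *: G p.1 = G x.
Proof.
move=> HG; rewrite -{2}(heps_counitr h x) (lin1_sum HG).
by apply: eq_bigr => p _; rewrite (lin1Z HG).
Qed.

Lemma antipl (W : lmodType k) (G : H -> W) x : lin1 G ->
  \sum_(p <- D x) G (S p.1 * p.2) = eps x *: G 1.
Proof.
by move=> HG; rewrite -(lin1_sum HG) (hS_antipodel h x) (lin1Z HG).
Qed.

Lemma antipr (W : lmodType k) (G : H -> W) x : lin1 G ->
  \sum_(p <- D x) G (p.1 * S p.2) = eps x *: G 1.
Proof.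
by move=> HG; rewrite -(lin1_sum HG) (hS_antipoder h x) (lin1Z HG).
Qed.

End HopfSums.

Section A3.
Variables (k : fieldType) (H : algType k) (h : hopf H).
Local Notation D := (hDelta h).
Local Notation S := (hS h).
Local Notation eps := (heps h).

Lemma grouplike_tri (P : H) :
  teq2 [seq (p.1, p.2 * P) | p <- D P] [:: (P, P)] ->
  forall (W : lmodType k) (g : H -> H -> H -> W), trilin g ->
  \sum_(p <- D P) \sum_(q <- D p.2) \sum_(r <- D P) g p.1 (q.1 * r.1) (q.2 * r.2)
  = \sum_(r <- D P) g P r.1 r.2.
Proof.
move=> Hgl W g Hg.
have HS := S_lin h.
have Hb : bilin (fun a b => \sum_(q <- D b) g a q.1 q.2).
  apply: mk_bilin => [y|x]; first by lin.
  apply: sumD_lin; apply: mk_bilin => *; lin.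
have := Hgl W _ Hb; rewrite big_map big_cons big_nil addr0 /= => <-.
apply: eq_bigr => p _; rewrite sumD_mul //.
apply: mk_bilin => *; lin.
Qed.

Lemma A3 (P : H) :
  teq2 [seq (p.1, p.2 * P) | p <- D P] [:: (P, P)] ->
  forall (W : lmodType k) (g : H -> H -> H -> W), trilin g ->
  \sum_(p <- D P) \sum_(q <- D P) g p.1 q.1 (p.2 * q.2) =
  \sum_(p <- D P) \sum_(q <- D P) g p.1 (S p.2 * q.1) q.2.
Proof.
move=> Hgl W g Hg.
have HS := S_lin h.
pose gam x y z := \sum_(s <- D x) g s.1 (S s.2 * y) z.
have Hgam : trilin gam.
  apply: mk_trilin => [y z|x z|x y]; last 2 first.
  - by rewrite /gam; lin.
  - by rewrite /gam; lin.
  rewrite /gam; apply: (@sumD_lin _ _ h _ (fun a b => g a (S b * y) z)).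
  by apply: mk_bilin => *; lin.
have := grouplike_tri Hgl Hgam; rewrite /gam.
rewrite exchange_big /= => <-.
pose g2 a b c := \sum_(q <- D c) \sum_(r <- D P) g a (S b * (q.1 * r.1)) (q.2 * r.2).
have Hg2 : trilin g2.
  apply: mk_trilin => [y z|x z|x y]; first by rewrite /g2; lin.
    by rewrite /g2; lin.
  rewrite /g2; apply: (@sumD_lin _ _ h _ (fun d e => \sum_(r <- D P) g x (S y * (d * r.1)) (e * r.2))).
  by apply: mk_bilin => *; lin.
transitivity (\sum_(p <- D P) \sum_(s <- D p.1) g2 s.1 s.2 p.2); last first.
  apply: eq_bigr => p _; rewrite /g2 exchange_big /=; apply: eq_bigr => q _.
  by rewrite exchange_big.
rewrite coassoc //; apply: eq_bigr => p _.
pose g3 a b c := \sum_(r <- D P) g p.1 (S a * (b * r.1)) (c * r.2).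
have Hg3 : trilin g3 by apply: mk_trilin => *; rewrite /g3; lin.
have := coassoc h p.2 Hg3; rewrite /g2 /g3 => <-.
rewrite [RHS](eq_bigr (fun s => eps s.1 *: \sum_(r <- D P) g p.1 (1 * r.1) (s.2 * r.2))); last first.
  move=> s _; rewrite -(@antipl _ _ h _ (fun t => \sum_(r <- D P) g p.1 (t * r.1) (s.2 * r.2))); last by lin.
  by apply: eq_bigr => q _; apply: eq_bigr => r _; rewrite mulrA.
rewrite (@counitl _ _ h _ (fun c => \sum_(r <- D P) g p.1 (1 * r.1) (c * r.2))); last by lin.
by apply: eq_bigr => r _; rewrite mul1r.
Qed.

End A3.

Section Anti.
Variables (k : fieldType) (H : algType k) (h : hopf H).
Local Notation D := (hDelta h).
Local Notation S := (hS h).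
Local Notation eps := (heps h).

Lemma S_anti x y : S (x * y) = S y * S x.
Proof.
have HS := S_lin h.
have He := eps_lin h.
symmetry.
transitivity (\sum_(p <- D x) \sum_(q <- D y)
   eps (p.1 * q.1) *: (S q.2 * S p.2)).
  rewrite -(@counitl _ _ h _ (fun t => S y * S t)); last by lin.
  apply: eq_bigr => p _.
  rewrite -(@counitl _ _ h _ (fun t => S t * S p.2)); last by lin.
  rewrite scaler_sumr; apply: eq_bigr => q _.
  by rewrite heps_mul scalerA.
transitivity (\sum_(p <- D x) \sum_(p' <- D p.1) \sum_(q <- D y) \sum_(q' <- D q.1)
   S (p'.1 * q'.1) * (p'.2 * q'.2) * (S q.2 * S p.2)).
  apply: eq_bigr => p _.
  rewrite exchange_big /=; apply: eq_bigr => q _.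
  have -> : eps (p.1 * q.1) *: (S q.2 * S p.2) =
     eps (p.1 * q.1) *: (1 * (S q.2 * S p.2)) by rewrite mul1r.
  rewrite -(@antipl _ _ h _ (fun t => t * (S q.2 * S p.2))); last by lin.
  rewrite (@sumD_mul _ _ h _ (fun a b => S a * b * (S q.2 * S p.2))) //.
  by apply: mk_bilin => *; lin.
pose gx a b c := \sum_(q <- D y) \sum_(q' <- D q.1)
   S (a * q'.1) * (b * q'.2) * (S q.2 * S c).
have Hgx : trilin gx by apply: mk_trilin => *; rewrite /gx; lin.
have := coassoc h x Hgx; rewrite /gx => ->.
transitivity (\sum_(p <- D x) \sum_(p' <- D p.2) \sum_(q <- D y)
   eps q.2 *: (S (p.1 * q.1) * p'.1 * 1 * S p'.2)).
  apply: eq_bigr => p _; apply: eq_bigr => p' _.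
  pose gy a b c := S (p.1 * a) * (p'.1 * b) * (S c * S p'.2).
  have Hgy : trilin gy by apply: mk_trilin => *; rewrite /gy; lin.
  have := coassoc h y Hgy; rewrite /gy => ->.
  apply: eq_bigr => q _.
  rewrite -(@antipr _ _ h _ (fun t => S (p.1 * q.1) * p'.1 * t * S p'.2)); last by lin.
  apply: eq_bigr => q' _.
  by rewrite !mulrA.
transitivity (\sum_(p <- D x) \sum_(p' <- D p.2) S (p.1 * y) * (p'.1 * S p'.2)).
  apply: eq_bigr => p _; apply: eq_bigr => p' _.
  rewrite -(@counitr _ _ h _ (fun t => S (p.1 * t) * (p'.1 * S p'.2))); last by lin.
  by apply: eq_bigr => q _; rewrite mulr1 !mulrA.
transitivity (\sum_(p <- D x) eps p.2 *: S (p.1 * y)).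
  apply: eq_bigr => p _.
  by rewrite (@antipr _ _ h _ (fun t => S (p.1 * y) * t)) ?mulr1 //; lin.
by rewrite (@counitr _ _ h _ (fun t => S (t * y))) //; lin.
Qed.

End Anti.

Section VP.
Variables (k : fieldType) (H : algType k) (h : hopf H).
Local Notation D := (hDelta h).
Local Notation S := (hS h).
Local Notation eps := (heps h).

Lemma lin1_combo (W : lmodType k) (G : H -> W) (nu : H -> k) (s : seq (H * H)) :
  lin1 G -> G (\sum_(p <- s) nu p.1 *: p.2) = \sum_(p <- s) nu p.1 *: G p.2.
Proof. by move=> HG; rewrite (lin1_sum HG); apply: eq_bigr => p _; rewrite (lin1Z HG). Qed.
Lemma lin1_combo2 (W : lmodType k) (G : H -> W) (nu : H -> k) (s : seq (H * H)) :
  lin1 G -> G (\sum_(p <- s) nu p.2 *: p.1) = \sum_(p <- s) nu p.2 *: G p.1.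
Proof. by move=> HG; rewrite (lin1_sum HG); apply: eq_bigr => p _; rewrite (lin1Z HG). Qed.

Lemma lf_add (nu mu : H -> k) (c : k) : lin_functional nu -> lin_functional mu ->
  lin_functional (fun x => c * nu x + mu x).
Proof.
move=> Hn Hm a x y; rewrite Hn Hm.
by ring.
Qed.

Lemma inVP_lin P c x y : inVP h P x -> inVP h P y -> inVP h P (c *: x + y).
Proof.
move=> [nu [Hn ->]] [mu [Hm ->]].
exists (fun x => c * nu x + mu x); split; first exact: lf_add.
rewrite scaler_sumr -big_split; apply: eq_bigr => p _.
by rewrite scalerA scalerDl.
Qed.
Lemma inVP0 P : inVP h P 0.
Proof.
exists (fun _ => 0); split; first by move=> *; rewrite mulr0 addr0.
by rewrite big1 // => p _; rewrite scale0r.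
Qed.
Lemma inPV_lin P c x y : inPV h P x -> inPV h P y -> inPV h P (c *: x + y).
Proof.
move=> [nu [Hn ->]] [mu [Hm ->]].
exists (fun x => c * nu x + mu x); split; first exact: lf_add.
rewrite scaler_sumr -big_split; apply: eq_bigr => p _.
by rewrite scalerA scalerDl.
Qed.
Lemma inPV0 P : inPV h P 0.
Proof.
exists (fun _ => 0); split; first by move=> *; rewrite mulr0 addr0.
by rewrite big1 // => p _; rewrite scale0r.
Qed.
Lemma inVPD P x y : inVP h P x -> inVP h P y -> inVP h P (x + y).
Proof. by move=> *; rewrite -(scale1r x); apply: inVP_lin. Qed.
Lemma inVPZ P c x : inVP h P x -> inVP h P (c *: x).
Proof. by move=> *; rewrite -(addr0 (c *: x)); apply: inVP_lin => //; apply: inVP0. Qed.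
Lemma inVP_sum P I (r : seq I) (F : I -> H) :
  (forall i, inVP h P (F i)) -> inVP h P (\sum_(i <- r) F i).
Proof.
move=> HF; elim: r => [|a r IH]; first by rewrite big_nil; apply: inVP0.
by rewrite big_cons; apply: inVPD.
Qed.

Variable P : H.
Hypothesis Hgl : teq2 [seq (p.1, p.2 * P) | p <- D P] [:: (P, P)].

Lemma Abil a : inVP h P a -> forall (W : lmodType k) (b : H -> H -> W), bilin b ->
  \sum_(q <- D P) b q.1 (a * q.2) = \sum_(q <- D P) b (S a * q.1) q.2.
Proof.
move=> [nu [Hn ->]] W b Hb.
have HS := S_lin h.
pose g x y z := nu x *: b y z.
have Hg : trilin g by apply: mk_trilin => *; rewrite /g; lin.
have := A3 Hgl Hg; rewrite /g => E.
transitivity (\sum_(p <- D P) \sum_(q <- D P) nu p.1 *: b q.1 (p.2 * q.2)).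
  rewrite exchange_big; apply: eq_bigr => q _ /=.
  by rewrite (@lin1_combo _ (fun t => b q.1 (t * q.2))) //; lin.
rewrite E exchange_big; apply: eq_bigr => q _ /=.
by rewrite (@lin1_combo _ (fun t => b (S t * q.1) q.2)) //; lin.
Qed.

Lemma inVPM a b : inVP h P a -> inVP h P b -> inVP h P (a * b).
Proof.
move=> Ha [mu [Hm ->]].
have HS := S_lin h.
exists (fun x => mu (S a * x)); split.
  by move=> c x y; rewrite mulrDr -scalerAr Hm.
rewrite (@lin1_combo _ (fun t => a * t)); last by lin.
have Hb : bilin (fun x y => mu x *: y) by apply: mk_bilin => *; lin.
by have := Abil Ha Hb.
Qed.

End VP.

Section Compl.
Variables (k : fieldType) (V : zmodType) (sc : k -> V -> V).

Definition kspace :=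
  [/\ forall c x y, sc c (x + y) = sc c x + sc c y,
      forall c d x, sc (c + d) x = sc c x + sc d x,
      forall c d x, sc (c * d) x = sc c (sc d x) &
      forall x, sc 1 x = x].

Definition subsp (N : V -> Prop) :=
  [/\ N 0, forall x y, N x -> N y -> N (x + y) & forall c x, N x -> N (sc c x)].

Hypothesis Hk : kspace.

Lemma sc0 x : sc 0 x = 0.
Proof.
case: Hk => _ H2 _ _; have := H2 0 0 x; rewrite addr0 => E.
by apply: (@addrI _ (sc 0 x)); rewrite addr0 -E.
Qed.
Lemma scx0 c : sc c 0 = 0.
Proof.
case: Hk => H1 _ _ _; have := H1 c 0 0; rewrite addr0 => E.
by apply: (@addrI _ (sc c 0)); rewrite addr0 -E.
Qed.
Lemma scN1 x : sc (-1) x = - x.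
Proof.
case: Hk => _ H2 _ H4; apply/eqP; rewrite -subr_eq0 opprK addrC.
by rewrite -{1}(H4 x) -H2 subrr sc0.
Qed.
Lemma scD c x y : sc c (x + y) = sc c x + sc c y. Proof. by case: Hk. Qed.
Lemma scDl c d x : sc (c + d) x = sc c x + sc d x. Proof. by case: Hk. Qed.
Lemma scM c d x : sc (c * d) x = sc c (sc d x). Proof. by case: Hk. Qed.
Lemma sc1 x : sc 1 x = x. Proof. by case: Hk. Qed.
Lemma scN c x : sc c (- x) = - sc c x.
Proof. by rewrite -scN1 -scM mulrC scM scN1. Qed.
Lemma scNl c x : sc (- c) x = - sc c x.
Proof. by rewrite -mulN1r scM scN1. Qed.
Lemma sc_suml I (r : seq I) (F : I -> k) x :
  sc (\sum_(i <- r) F i) x = \sum_(i <- r) sc (F i) x.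
Proof.
elim: r => [|a r IH]; first by rewrite !big_nil sc0.
by rewrite !big_cons scDl IH.
Qed.
Lemma sc_sumr I (r : seq I) (F : I -> V) c :
  sc c (\sum_(i <- r) F i) = \sum_(i <- r) sc c (F i).
Proof.
elim: r => [|a r IH]; first by rewrite !big_nil scx0.
by rewrite !big_cons scD IH.
Qed.

Lemma subspN N x : subsp N -> N x -> N (- x).
Proof. by case=> _ _ H3 Nx; rewrite -scN1; apply: H3. Qed.

Lemma complement (N C0 : V -> Prop) :
  subsp N -> subsp C0 -> (forall x, N x -> C0 x -> x = 0) ->
  exists pi : V -> V,
    [/\ forall x y, pi (x + y) = pi x + pi y,
        forall c x, pi (sc c x) = sc c (pi x),
        forall x, N (pi x),
        forall x, N x -> pi x = x &
        forall x, C0 x -> pi x = 0].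
Proof.
move=> HN HC HNC.
pose Pz (A : set V) :=
  [/\ (forall x y, A x -> A y -> A (x + y)), (forall c x, A x -> A (sc c x)),
      (forall x, A x -> N x -> x = 0) & (forall x, A x -> forall c0, C0 c0 -> A c0)].
have [A [[AD AZ AN AC] Amax]] : exists A, Pz A /\ forall B, (A `<` B)%classic -> ~ Pz B.
  apply: Zorn_bigcup => F FP Ftot; split.
  - move=> x y [X FX Xx] [Y FY Yy].
    have [XY|YX] := Ftot X Y FX FY.
    + exists Y => //; case: (FP Y FY) => H1 _ _ _; exact: H1 (XY _ Xx) Yy.
    + exists X => //; case: (FP X FX) => H1 _ _ _; exact: H1 Xx (YX _ Yy).
  - move=> c x [X FX Xx]; exists X => //; case: (FP X FX) => _ H2 _ _; exact: H2.
  - move=> x [X FX Xx]; case: (FP X FX) => _ _ H3 _; exact: H3.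
  - move=> x [X FX Xx] c0 Cc0; exists X => //; case: (FP X FX) => _ _ _ H4; exact: H4 Xx _ Cc0.
have [a0 Aa0] : exists a0, A a0.
  apply: NNPP => nA; apply: (Amax C0).
    split; first by move=> x Ax; exfalso; apply: nA; exists x.
    move=> sub; apply: nA; exists 0; apply: sub; by case: HC.
  case: HC => HC0 HC1 HC2; split => //.
  by move=> x Cx Nx; apply: HNC.
have A0 : A 0 by apply: (AC _ Aa0); case: HC.
have AN' x : A x -> A (- x) by move=> Ax; rewrite -scN1; apply: AZ.
have dec x : exists n, N n /\ exists a, A a /\ x = a + n.
  apply: NNPP => ndec.
  pose B := fun v => exists a t, A a /\ v = a + sc t x.
  apply: (Amax B).
    split; first by move=> v Av; exists v, 0; rewrite sc0 addr0.
    move=> sub; have Ax : A x by apply: sub; exists 0, 1; rewrite sc1 add0r.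
    apply: ndec; exists 0; split; first by case: HN.
    by exists x; rewrite addr0.
  split.
  - move=> v1 v2 [a1 [t1 [A1 ->]]] [a2 [t2 [A2 ->]]].
    exists (a1 + a2), (t1 + t2); split; first exact: AD.
    by rewrite scDl addrACA.
  - move=> c v [a1 [t1 [A1 ->]]]; exists (sc c a1), (c * t1); split; first exact: AZ.
    by rewrite scD scM.
  - move=> v [a1 [t1 [A1 ->]]] Nv.
    have [t0|tn0] := eqVneq t1 0.
      by move: Nv A1; rewrite t0 sc0 addr0 => Nv A1; apply: AN.
    exfalso; apply: ndec.
    exists (sc t1^-1 (a1 + sc t1 x)); split; first by case: HN => _ _; apply.
    exists (- sc t1^-1 a1); split; first by apply: AN'; apply: AZ.
    by rewrite scD -scM mulVf // sc1 addrA addNr add0r.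
  - move=> v _ c0 Cc0; exists c0, 0; split; first exact: (AC _ Aa0 _ Cc0).
    by rewrite sc0 addr0.
have uniq (n1 n2 a1 a2 : V) : N n1 -> N n2 -> A a1 -> A a2 -> a1 + n1 = a2 + n2 -> n1 = n2.
  move=> N1 N2 A1 A2 E.
  have E2 : n1 - n2 = a2 - a1.
    have -> : n1 = (a1 + n1) - a1 by rewrite addrAC subrr add0r.
    by rewrite E addrAC addrK.
  apply/eqP; rewrite -subr_eq0; apply/eqP; apply: AN.
    by rewrite E2; apply: AD => //; apply: AN'.
  by have [_ HN1 _] := HN; apply: HN1 => //; apply: subspN.
pose pi x := sval (cid (dec x)).
have piP x : N (pi x) /\ exists a, A a /\ x = a + pi x by rewrite /pi; case: cid.
have piU x n a : N n -> A a -> x = a + n -> pi x = n.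
  move=> Nn Aa E; have [Np [a' [Aa' E']]] := piP x.
  by apply: (uniq (pi x) n a' a Np Nn Aa' Aa); rewrite -E' -E.
exists pi; split.
- move=> x y; have [Nx [ax [Ax Ex]]] := piP x; have [Ny [ay [Ay Ey]]] := piP y.
  apply: (piU _ _ (ax + ay)); first by case: HN => _ HN1 _; apply: HN1.
    exact: AD.
  by rewrite {1}Ex {1}Ey addrACA.
- move=> c x; have [Nx [ax [Ax Ex]]] := piP x.
  apply: (piU _ _ (sc c ax)); first by case: HN => _ _; apply.
    exact: AZ.
  by rewrite {1}Ex scD.
- by move=> x; case: (piP x).
- by move=> x Nx; apply: (piU _ _ 0) => //; rewrite add0r.
- move=> x Cx; apply: (piU _ _ x); first by case: HN.
    exact: (AC _ Aa0 _ Cx).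
  by rewrite addr0.
Qed.

End Compl.

Section LinAlg.
Variables (k : fieldType) (U : lmodType k).

Lemma kspace_lmod : kspace (fun (c : k) (x : U) => c *: x).
Proof. by split=> *; rewrite ?scalerDr ?scalerDl ?scalerA ?scale1r. Qed.

Definition lsub (C : U -> Prop) := C 0 /\ forall c x y, C x -> C y -> C (c *: x + y).

Lemma lsub_subsp C : lsub C -> subsp (fun c (x : U) => c *: x) C.
Proof.
case=> C0 CL; split => //.
- by move=> x y Cx Cy; rewrite -(scale1r x); apply: CL.
- by move=> c x Cx; rewrite -(addr0 (c *: x)); apply: CL.
Qed.

Lemma lsub_sum C I (r : seq I) (F : I -> U) :
  lsub C -> (forall i, List.In i r -> C (F i)) -> C (\sum_(i <- r) F i).
Proof.
move=> [C0 CL]; elim: r => [|a r IH] HF; first by rewrite big_nil.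
rewrite big_cons -(scale1r (F a)); apply: CL; first by apply: HF; left.
by apply: IH => i Hi; apply: HF; right.
Qed.

Lemma fext (C : U -> Prop) (r : U) : lsub C -> ~ C r ->
  exists lam : U -> k, [/\ lin_functional lam, lam r = 1 & forall v, C v -> lam v = 0].
Proof.
move=> HC nCr.
have r0 : r != 0 by apply/eqP => r0; apply: nCr; rewrite r0; case: HC.
pose N := fun x => exists t, x = t *: r.
have HN : subsp (fun c (x : U) => c *: x) N.
  split; first by exists 0; rewrite scale0r.
  - by move=> x y [t1 ->] [t2 ->]; exists (t1 + t2); rewrite scalerDl.
  - by move=> c x [t ->]; exists (c * t); rewrite scalerA.
have disj : forall x, N x -> C x -> x = 0.
  move=> x [t ->] Cx; have [t0|tn0] := eqVneq t 0; first by rewrite t0 scale0r.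
  exfalso; apply: nCr; have -> : r = t^-1 *: (t *: r) by rewrite scalerA mulVf // scale1r.
  rewrite -(addr0 (_ *: _)); case: HC => C0 CL; exact: CL.
have [pi [piD piZ piN piId pi0]] := complement kspace_lmod HN (lsub_subsp HC) disj.
pose lam x := sval (cid (piN x)).
have lamP x : pi x = lam x *: r by rewrite /lam; case: cid.
have lamU x t : pi x = t *: r -> lam x = t.
  move=> E; apply/eqP; rewrite -subr_eq0.
  have : (lam x - t) *: r == 0 by rewrite scalerBl -lamP -E subrr.
  by rewrite scaler_eq0 (negbTE r0) orbF.
exists lam; split.
- move=> c x y; apply: lamU.
  by rewrite piD piZ !lamP scalerDl scalerA.
- by apply: lamU; rewrite piId ?scale1r //; exists 1; rewrite scale1r.
- by move=> v Cv; apply: lamU; rewrite pi0 // scale0r.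
Qed.


Lemma eq_big_In (W : zmodType) I (r : seq I) (F G : I -> W) :
  (forall i, List.In i r -> F i = G i) -> \sum_(i <- r) F i = \sum_(i <- r) G i.
Proof.
elim: r => [|a r IH] HFG; first by rewrite !big_nil.
rewrite !big_cons HFG; last by left.
by rewrite IH // => i Hi; apply: HFG; right.
Qed.

Lemma lsub_lf (Dl : seq ((U -> k) * U)) :
  (forall d, List.In d Dl -> lin_functional d.1) ->
  lin1 (fun v => \sum_(d <- Dl) d.1 v *: d.2).
Proof.
move=> HD c x y; rewrite scaler_sumr -big_split /=.
apply: eq_big_In => d Hd; rewrite (HD d Hd).
by rewrite scalerDl scalerA.
Qed.

Lemma dual_basis (Sp : U -> Prop) (X : seq U) : lsub Sp ->
  (forall x, x \in X -> Sp x) ->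
  exists Dl : seq ((U -> k) * U),
    [/\ forall d, List.In d Dl -> lin_functional d.1 /\ Sp d.2,
        forall x, x \in X -> x = \sum_(d <- Dl) d.1 x *: d.2 &
        forall d, List.In d Dl -> d.2 = \sum_(e <- Dl) e.1 d.2 *: e.2].
Proof.
move=> HSp; elim: X => [|x X IH] HX.
  by exists [::]; split.
have [Dl [HD1 HD2 HD3]] := IH (fun y Hy => HX y (@mem_behead _ (x :: X) _ Hy)).
pose R v := \sum_(d <- Dl) d.1 v *: d.2.
have HR : lin1 R by apply: lsub_lf => d Hd; case: (HD1 d Hd).
pose C v := v = R v.
have HC : lsub C.
  split; first by rewrite /C (lin1_0 HR).
  by move=> c u v Cu Cv; rewrite /C (HR c u v) -Cu -Cv.
have RR v : R (R v) = R v.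
  rewrite {2}/R (lin1_sum HR) [RHS]/R; apply: eq_big_In => d Hd.
  by rewrite (lin1Z HR) -[R d.2]/(\sum_(e <- Dl) e.1 d.2 *: e.2) -HD3.
have CR v : C (R v) by rewrite /C RR.
pose r := x - R x.
have [r0|rn0] := eqVneq r 0.
  exists Dl; split => //.
  move=> y; rewrite inE => /orP[/eqP ->|Hy]; last exact: HD2.
  by apply/eqP; rewrite -subr_eq0; apply/eqP.
have nCr : ~ C r.
  rewrite /C /r (lin1B HR) RR subrr => E.
  by move: rn0; rewrite /r E eqxx.
have [lam [Hl lr lC]] := fext HC nCr.
have Hlam : @lin1 k U k^o lam by [].
have Sr : Sp r.
  have [S0 SL] := HSp.
  rewrite /r addrC -scaleN1r; apply SL; last by apply: HX; rewrite inE eqxx.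
  apply: lsub_sum => [//|d Hd]; rewrite -(addr0 (_ *: _)); apply SL => //.
  by case: (HD1 d Hd).
exists ((lam, r) :: Dl); split.
- move=> d [<-|Hd] //; exact: HD1.
- move=> y; rewrite inE big_cons /= => /orP[/eqP ->|Hy].
    have -> : lam x = 1.
      rewrite -lr -[in LHS](subrK (R x) x) -/r (lin1D Hlam).
      by rewrite (lC _ (CR x)) addr0.
    by rewrite scale1r /r subrK.
  have Cy : C y by apply: HD2.
  by rewrite (lC _ Cy) scale0r add0r.
- move=> d; rewrite big_cons /= => -[<-|Hd] /=.
    have Rr0 : R r = 0 by rewrite /r (lin1B HR) RR subrr.
    by rewrite lr scale1r -/(R r) Rr0 addr0.
  have Cd : C d.2 by apply: HD3.
  by rewrite (lC _ Cd) scale0r add0r.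
Qed.


Section Transfer.
Variables (V : zmodType) (sc : k -> V -> V) (Hk : kspace sc).
Variables (Sp : U -> Prop) (HSp : lsub Sp) (Phi : U -> U -> V).
Hypothesis Hl : forall c x y b, Sp x -> Sp y -> Sp b ->
  Phi (c *: x + y) b = sc c (Phi x b) + Phi y b.
Hypothesis Hr : forall c a x y, Sp a -> Sp x -> Sp y ->
  Phi a (c *: x + y) = sc c (Phi a x) + Phi a y.

Lemma SpZ c x : Sp x -> Sp (c *: x).
Proof. by case: HSp => S0 SL Sx; rewrite -(addr0 (c *: x)); apply: SL. Qed.

Lemma Phi0l b : Sp b -> Phi 0 b = 0.
Proof.
case: HSp => S0 _ Sb; have := Hl 1 S0 S0 Sb; rewrite scaler0 addr0 (sc1 Hk) => E.
by apply: (@addrI _ (Phi 0 b)); rewrite addr0 -E.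
Qed.
Lemma Phi0r a : Sp a -> Phi a 0 = 0.
Proof.
case: HSp => S0 _ Sa; have := Hr 1 Sa S0 S0; rewrite scaler0 addr0 (sc1 Hk) => E.
by apply: (@addrI _ (Phi a 0)); rewrite addr0 -E.
Qed.

Lemma PhiL (cs : seq ((U -> k) * U)) (f : (U -> k) * U -> k) b :
  (forall d, List.In d cs -> Sp d.2) -> Sp b ->
  Phi (\sum_(d <- cs) f d *: d.2) b = \sum_(d <- cs) sc (f d) (Phi d.2 b).
Proof.
move=> Hcs Sb; elim: cs Hcs => [|a cs IH] Hcs; first by rewrite !big_nil Phi0l.
rewrite !big_cons Hl //; first by rewrite IH // => d Hd; apply: Hcs; right.
  by apply: Hcs; left.
by apply: lsub_sum => // d Hd; apply: SpZ; apply: Hcs; right.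
Qed.

Lemma PhiR (cs : seq ((U -> k) * U)) (f : (U -> k) * U -> k) a :
  (forall d, List.In d cs -> Sp d.2) -> Sp a ->
  Phi a (\sum_(d <- cs) f d *: d.2) = \sum_(d <- cs) sc (f d) (Phi a d.2).
Proof.
move=> Hcs Sa; elim: cs Hcs => [|e cs IH] Hcs; first by rewrite !big_nil Phi0r.
rewrite !big_cons Hr //; first by rewrite IH // => d Hd; apply: Hcs; right.
  by apply: Hcs; left.
by apply: lsub_sum => // d Hd; apply: SpZ; apply: Hcs; right.
Qed.

Lemma transfer (s t : seq (U * U)) :
  (forall p, p \in s -> Sp p.1 /\ Sp p.2) -> (forall p, p \in t -> Sp p.1 /\ Sp p.2) ->
  (forall mu lam, lin_functional mu -> lin_functional lam ->
     \sum_(p <- s) mu p.1 * lam p.2 = \sum_(p <- t) mu p.1 * lam p.2) ->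
  \sum_(p <- s) Phi p.1 p.2 = \sum_(p <- t) Phi p.1 p.2.
Proof.
move=> Hs Ht Heq.
pose X := map fst s ++ map snd s ++ map fst t ++ map snd t.
have HX : forall x, x \in X -> Sp x.
  move=> x; rewrite !mem_cat => /or4P[] /mapP[p Hp ->].
  - by case: (Hs p Hp).
  - by case: (Hs p Hp).
  - by case: (Ht p Hp).
  - by case: (Ht p Hp).
have [Dl [HD1 HD2 _]] := dual_basis HSp HX.
have HD2' d : List.In d Dl -> Sp d.2 by move=> Hd; case: (HD1 d Hd).
have expand a b : a \in X -> b \in X -> Phi a b =
    \sum_(d <- Dl) \sum_(e <- Dl) sc (d.1 a * e.1 b) (Phi d.2 e.2).
  move=> Ha Hb; rewrite {1}(HD2 a Ha) PhiL //; last exact: HX.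
  apply: eq_big_In => d Hd; rewrite {1}(HD2 b Hb) PhiR //; last exact: HD2'.
  rewrite (sc_sumr Hk); apply: eq_bigr => e _; by rewrite (scM Hk).
have G (r : seq (U * U)) : (forall p, p \in r -> p.1 \in X /\ p.2 \in X) ->
    \sum_(p <- r) Phi p.1 p.2 = \sum_(d <- Dl) \sum_(e <- Dl)
       sc (\sum_(p <- r) d.1 p.1 * e.1 p.2) (Phi d.2 e.2).
  move=> Hr'; rewrite big_seq (eq_bigr (fun p => \sum_(d <- Dl) \sum_(e <- Dl)
      sc (d.1 p.1 * e.1 p.2) (Phi d.2 e.2))); last first.
    by move=> p Hp; case: (Hr' p Hp) => H1 H2; apply: expand.
  rewrite -big_seq exchange_big; apply: eq_bigr => d _.
  rewrite exchange_big; apply: eq_bigr => e _.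
  by rewrite (sc_suml Hk).
rewrite !G; first last.
- move=> p Hp; rewrite /X !mem_cat.
  by rewrite (map_f fst Hp) (map_f snd Hp) !orbT.
- move=> p Hp; rewrite /X !mem_cat.
  by rewrite (map_f fst Hp) (map_f snd Hp) !orbT.
apply: eq_big_In => d Hd; apply: eq_big_In => e He.
have [lf1 _] := HD1 d Hd; have [lf2 _] := HD1 e He.
by rewrite (Heq _ _ lf1 lf2).
Qed.

End Transfer.

End LinAlg.

Lemma in_map_In (A : Type) (T : eqType) (g : A -> T) (Dl : seq A) x :
  x \in map g Dl -> exists d, List.In d Dl /\ x = g d.
Proof.
elim: Dl => [|d Dl IH] //=; rewrite inE => /orP[/eqP ->|Hx].
  by exists d; split => //; left.
by have [e [He ->]] := IH Hx; exists e; split => //; right.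
Qed.

Section Nice.
Variables (k : fieldType) (H : algType k) (h : hopf H).
Local Notation D := (hDelta h).

Lemma teq2_sym (s t : seq (H * H)) : teq2 s t -> teq2 t s.
Proof. by move=> E W b Hb; rewrite E. Qed.
Lemma teq2_trans (s t u : seq (H * H)) : teq2 s t -> teq2 t u -> teq2 s u.
Proof. by move=> E1 E2 W b Hb; rewrite E1 ?E2. Qed.

Lemma reduce2 (s : seq (H * H)) (Dl : seq ((H -> k) * H)) :
  (forall d, List.In d Dl -> lin_functional d.1) ->
  (forall p, p \in s -> p.2 = \sum_(d <- Dl) d.1 p.2 *: d.2) ->
  teq2 s [seq (\sum_(p <- s) d.1 p.2 *: p.1, d.2) | d <- Dl].
Proof.
move=> HD Hs W b Hb; rewrite big_map /=.
transitivity (\sum_(d <- Dl) \sum_(p <- s) d.1 p.2 *: b p.1 d.2); last first.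
  apply: eq_bigr => d _; rewrite (lin1_sum (bilinl Hb d.2)).
  by apply: eq_bigr => p _; rewrite (lin1Z (bilinl Hb d.2)).
rewrite exchange_big big_seq [RHS]big_seq; apply: eq_bigr => p Hp.
rewrite {1}(Hs p Hp) (lin1_sum (bilinr Hb p.1)).
by apply: eq_bigr => d _; rewrite (lin1Z (bilinr Hb p.1)).
Qed.

Lemma reduce1 (s : seq (H * H)) (Dl : seq ((H -> k) * H)) :
  (forall d, List.In d Dl -> lin_functional d.1) ->
  (forall p, p \in s -> p.1 = \sum_(d <- Dl) d.1 p.1 *: d.2) ->
  teq2 s [seq (d.2, \sum_(p <- s) d.1 p.1 *: p.2) | d <- Dl].
Proof.
move=> HD Hs W b Hb; rewrite big_map /=.
transitivity (\sum_(d <- Dl) \sum_(p <- s) d.1 p.1 *: b d.2 p.2); last first.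
  apply: eq_bigr => d _; rewrite (lin1_sum (bilinr Hb d.2)).
  by apply: eq_bigr => p _; rewrite (lin1Z (bilinr Hb d.2)).
rewrite exchange_big big_seq [RHS]big_seq; apply: eq_bigr => p Hp.
rewrite {1}(Hs p Hp) (lin1_sum (bilinl Hb p.2)).
by apply: eq_bigr => d _; rewrite (lin1Z (bilinl Hb p.2)).
Qed.

Lemma nice (P : H) : exists L2 : seq (H * H), teq2 (D P) L2 /\
  forall p, p \in L2 -> inPV h P p.1 /\ inVP h P p.2.
Proof.
have lT : lsub (fun _ : H => True) by [].
have [Dl1 [HD1 HD2 _]] := @dual_basis _ _ _ (map snd (D P)) lT (fun _ _ => I).
pose L1 := [seq (\sum_(p <- D P) d.1 p.2 *: p.1, d.2) | d <- Dl1].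
have E1 : teq2 (D P) L1.
  apply: reduce2; first by move=> d Hd; case: (HD1 d Hd).
  by move=> p Hp; apply: HD2; apply: map_f.
have lPV : lsub (inPV h P).
  split; first exact: inPV0.
  by move=> c x y; apply: inPV_lin.
have HX : forall x, x \in map fst L1 -> inPV h P x.
  move=> x; rewrite /L1 -map_comp => /in_map_In [d [Hd ->]] /=.
  by exists d.1; split => //; case: (HD1 d Hd).
have [Dl2 [HE1 HE2 _]] := dual_basis lPV HX.
pose L2 := [seq (d.2, \sum_(p <- L1) d.1 p.1 *: p.2) | d <- Dl2].
have E2 : teq2 L1 L2.
  apply: reduce1; first by move=> d Hd; case: (HE1 d Hd).
  by move=> p Hp; apply: HE2; apply: map_f.
exists L2; split; first exact: teq2_trans E1 E2.
move=> p /in_map_In [d [Hd ->]] /=; have [lf1 Sd] := HE1 d Hd; split => //.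
exists d.1; split => //.
have Hb : bilin (fun a b : H => d.1 a *: b) by apply: mk_bilin => *; lin.
by have := E1 _ _ Hb.
Qed.

End Nice.

Lemma lf_bil (k : fieldType) (H : lmodType k) (mu lam : H -> k) :
  lin_functional mu -> lin_functional lam ->
  @bilin k H k^o (fun a b => mu a * lam b).
Proof.
move=> Hm Hl; split => [b c x y|a c x y] /=.
  by rewrite Hm mulrDl -mulrA.
by rewrite Hl mulrDr mulrCA.
Qed.

Lemma inVP_sum_in (k : fieldType) (H : algType k) (h : hopf H) P (T : eqType)
  (r : seq T) (F : T -> H) :
  (forall i, i \in r -> inVP h P (F i)) -> inVP h P (\sum_(i <- r) F i).
Proof.
elim: r => [|a r IH] HF; first by rewrite big_nil; apply: inVP0.
rewrite big_cons; apply: inVPD; first by apply: HF; rewrite inE eqxx.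
by apply: IH => i Hi; apply: HF; rewrite inE Hi orbT.
Qed.

Lemma sum_in_closed (M : zmodType) (N : M -> Prop) (T : eqType) (r : seq T) (F : T -> M) :
  N 0 -> (forall m n, N m -> N n -> N (m + n)) ->
  (forall i, i \in r -> N (F i)) -> N (\sum_(i <- r) F i).
Proof.
move=> N0 ND; elim: r => [|a r IH] HF; first by rewrite big_nil.
rewrite big_cons; apply: ND; first by apply: HF; rewrite inE eqxx.
by apply: IH => i Hi; apply: HF; rewrite inE Hi orbT.
Qed.

Unset Implicit Arguments.

Theorem mainTheorem20 (k : fieldType) (H : algType k) (h : hopf H) (P : H)
  (y : H) (iota : H -> H) :
  right_group_like_projection h P ->
  VP_Frobenius h P ->
  cyclic_PV h P y ->
  (* iota_y : _P V -> V_P, iota_y(S(a) y) = a, extended k-linearly to H *)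
  klinear iota ->
  (forall a, inVP h P a -> iota (hS h a * y) = a) ->
  (* z_y = P_(2) iota_y(P_(1)) is invertible in V_P *)
  (exists2 w, inVP h P w &
     let z := \sum_(p <- hDelta h P) p.2 * iota p.1 in z * w = 1 /\ w * z = 1) ->
  forall (M : zmodType) (act : M -> H -> M),
    right_VP_module h P act -> completely_reducible h P act.
Proof.
move=> [P0 PP Hgl _] _ [Hy Hcyc] Hiota Hiy [w Hw /= [zw wz]] M act [Ma1 MaD MaA MaM].
set z := \sum_(p <- hDelta h P) p.2 * iota p.1 in zw wz.
have HS := S_lin h.
have Hio : lin1 iota by [].
have [L2 [EL HL]] := nice h P.
have iotaV p : p \in L2 -> inVP h P (iota p.1).
  move=> Hp; have [a Ha ->] := Hcyc _ (HL p Hp).1; by rewrite Hiy.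
have iotaS x p : inVP h P x -> p \in L2 -> iota (hS h x * p.1) = iota p.1 * x.
  move=> Hx Hp; have [a Ha ->] := Hcyc _ (HL p Hp).1.
  rewrite mulrA -S_anti Hiy ?Hiy //; exact: inVPM.
have sep x : inVP h P x -> forall (W : lmodType k) (b : H -> H -> W), bilin b ->
    \sum_(p <- L2) b (x * p.2) (iota p.1) = \sum_(p <- L2) b p.2 (iota p.1 * x).
  move=> Hx W b Hb.
  have Hb1 : bilin (fun a c => b (x * c) (iota a)) by apply: mk_bilin => *; lin.
  have := EL _ _ Hb1 => /= <-.
  have Hb2 : bilin (fun a c => b c (iota a)) by apply: mk_bilin => *; lin.
  have := Abil Hgl Hx Hb2 => /= ->.
  have Hb3 : bilin (fun a c => b c (iota (hS h x * a))) by apply: mk_bilin => *; lin.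
  have := EL _ _ Hb3 => /= ->.
  by apply: eq_big_seq => p Hp; rewrite iotaS.
have HbM : bilin (fun a b : H => a * b) by apply: mk_bilin => *; lin.
have zL : z = \sum_(p <- L2) p.2 * iota p.1.
  have Hb : bilin (fun a b : H => b * iota a) by apply: mk_bilin => *; lin.
  by have := EL _ _ Hb.
have zV : inVP h P z.
  by rewrite zL; apply: inVP_sum_in => p Hp; apply: (inVPM Hgl) => //; [case: (HL p Hp)|apply: iotaV].
have one : inVP h P 1 by rewrite -zw; apply: (inVPM Hgl).
have zc x : inVP h P x -> x * z = z * x.
  move=> Hx; rewrite zL mulr_sumr mulr_suml.
  have := sep x Hx _ _ HbM => /= E.
  transitivity (\sum_(p <- L2) x * p.2 * iota p.1); first by apply: eq_bigr => p _; rewrite mulrA.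
  by rewrite E; apply: eq_bigr => p _; rewrite mulrA.
have wc x : inVP h P x -> x * w = w * x.
  move=> Hx; apply/esym.
  by rewrite -[w * x]mulr1 -zw !mulrA -(mulrA w x z) zc // !mulrA wz mul1r.
pose sc c m := act m (c *: 1).
have V1c c : inVP h P (c *: 1) by apply: inVPZ.
have Hk : kspace sc.
  split.
  - by move=> c m n; rewrite /sc MaD.
  - by move=> c d m; rewrite /sc scalerDl MaA.
  - move=> c d m; rewrite /sc -(MaM m _ _ (V1c d) (V1c c)).
    by rewrite -scalerAl mul1r scalerA mulrC.
  - by move=> m; rewrite /sc scale1r Ma1.
have act0r m : act m 0 = 0.
  have := MaA m 0 0 (inVP0 h P) (inVP0 h P); rewrite addr0 => E.
  by apply: (@addrI _ (act m 0)); rewrite addr0 -E.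
have act0l a : inVP h P a -> act 0 a = 0.
  move=> Ha; have := MaD 0 0 a Ha; rewrite addr0 => E.
  by apply: (@addrI _ (act 0 a)); rewrite addr0 -E.
have actsum_r m (T : eqType) (r : seq T) (F : T -> H) :
    (forall i, i \in r -> inVP h P (F i)) ->
    act m (\sum_(i <- r) F i) = \sum_(i <- r) act m (F i).
  elim: r => [|a r IH] HF; first by rewrite !big_nil act0r.
  rewrite !big_cons MaA; first by rewrite IH // => i Hi; apply: HF; rewrite inE Hi orbT.
    by apply: HF; rewrite inE eqxx.
  by apply: inVP_sum_in => i Hi; apply: HF; rewrite inE Hi orbT.
have actsum_l (T : Type) (r : seq T) (F : T -> M) a : inVP h P a ->
    act (\sum_(i <- r) F i) a = \sum_(i <- r) act (F i) a.
  move=> Ha; elim: r => [|b r IH]; first by rewrite !big_nil act0l.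
  by rewrite !big_cons MaD // IH.
have actZ m c a : inVP h P a -> act m (c *: a) = sc c (act m a).
  by move=> Ha; rewrite /sc -MaM // -scalerAr mulr1.
have actZl m c a : inVP h P a -> act (sc c m) a = sc c (act m a).
  by move=> Ha; rewrite /sc -MaM // -scalerAl mul1r actZ.
move=> N [N0 ND NA].
have HN : subsp sc N.
  by split => // c n Nn; apply: NA.
have HC : subsp sc (fun m => m = 0).
  split => //; first by move=> a b -> ->; rewrite addr0.
  by move=> c x ->; rewrite /sc act0l.
have [pi [piD piZ piN piId pi0]] := complement Hk HN HC (fun x _ E => E).
have wV p : p \in L2 -> inVP h P (w * p.2) by move=> Hp; apply: (inVPM Hgl) => //; case: (HL p Hp).
pose Phi m a b := act (pi (act m (w * a))) b.
pose pi' m := \sum_(p <- L2) Phi m p.2 (iota p.1).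
have piN' m : N (pi' m).
  apply: sum_in_closed => // p Hp; apply: NA => //; exact: iotaV.
have pi'D m n : pi' (m + n) = pi' m + pi' n.
  rewrite /pi' /Phi -big_split; apply: eq_big_seq => p Hp /=.
  by rewrite (MaD _ _ _ (wV p Hp)) piD (MaD _ _ _ (iotaV p Hp)).
have pi'0 : pi' 0 = 0.
  by have := pi'D 0 0; rewrite addr0 => E; apply: (@addrI _ (pi' 0)); rewrite addr0 -E.
have pi'N m : pi' (- m) = - pi' m.
  by apply/eqP; rewrite -subr_eq0 opprK -pi'D addNr pi'0.
have pi'Id n : N n -> pi' n = n.
  move=> Nn; rewrite /pi' /Phi.
  transitivity (\sum_(p <- L2) act n (w * p.2 * iota p.1)).
    apply: eq_big_seq => p Hp; rewrite piId; last by apply: NA => //; apply: wV.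
    by rewrite (MaM _ _ _ (wV p Hp) (iotaV p Hp)).
  rewrite -actsum_r; last by move=> p Hp; apply: (inVPM Hgl); [apply: wV|apply: iotaV].
  rewrite (eq_bigr (fun p => w * (p.2 * iota p.1))); last by move=> p _; rewrite mulrA.
  by rewrite -mulr_sumr -zL wz Ma1.
have Hl m : forall c a a' b, inVP h P a -> inVP h P a' -> inVP h P b ->
    Phi m (c *: a + a') b = sc c (Phi m a b) + Phi m a' b.
  move=> c a a' b Ha Ha' Hb; rewrite /Phi mulrDr -scalerAr.
  rewrite MaA; [|by apply: inVPZ; apply: (inVPM Hgl)|by apply: (inVPM Hgl)].
  rewrite actZ; last by apply: (inVPM Hgl).
  by rewrite piD piZ MaD // actZl.
have Hr m : forall c a b b', inVP h P a -> inVP h P b -> inVP h P b' ->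
    Phi m a (c *: b + b') = sc c (Phi m a b) + Phi m a b'.
  move=> c a b b' Ha Hb Hb'.
  by rewrite /Phi (MaA _ _ _ (inVPZ c Hb) Hb') actZ.
have lV : lsub (inVP h P).
  by split; [apply: inVP0|move=> c x x'; apply: inVP_lin].
have pi'A m x : inVP h P x -> pi' (act m x) = act (pi' m) x.
  move=> Hx; rewrite /pi' actsum_l //.
  transitivity (\sum_(q <- [seq (x * p.2, iota p.1) | p <- L2]) Phi m q.1 q.2).
    rewrite big_map; apply: eq_big_seq => p Hp /=; rewrite /Phi.
    rewrite -(MaM _ _ _ Hx (wV p Hp)); congr (act (pi (act m _)) _).
    by rewrite mulrA wc // mulrA.
  transitivity (\sum_(q <- [seq (p.2, iota p.1 * x) | p <- L2]) Phi m q.1 q.2); last first.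
    rewrite big_map; apply: eq_big_seq => p Hp /=; rewrite /Phi.
    by rewrite (MaM _ _ _ (iotaV p Hp) Hx).
  apply: (transfer Hk lV (Hl m) (Hr m)).
  - move=> q /mapP [p Hp ->] /=; split; last exact: iotaV.
    by apply: (inVPM Hgl) => //; case: (HL p Hp).
  - move=> q /mapP [p Hp ->] /=; split; first by case: (HL p Hp).
    by apply: (inVPM Hgl) => //; apply: iotaV.
  - move=> mu lam Hmu Hlam; rewrite !big_map /=.
    exact: (sep x Hx _ _ (lf_bil Hmu Hlam)).
exists (fun m => pi' m = 0); split.
- split => //.
  + by move=> m n E1 E2; rewrite pi'D E1 E2 addr0.
  + by move=> m a E Ha; rewrite pi'A // E act0l.
- move=> m; exists (pi' m), (m - pi' m); split => //.
    by rewrite pi'D pi'N (pi'Id _ (piN' m)) subrr.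
  by rewrite addrC subrK.
- by move=> m Nm E; rewrite -(pi'Id m Nm).
Qed.
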